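(* Let $n,m\in\mathbb{N}$, let $\mathcal{Y}\subset\mathbb{R}^m$ be nonempty, convex and compact, and let $f:2^{[n]}\times\mathbb{R}^m\to\mathbb{R}$ be such that $f(\cdot,y)$ is submodular for every $y$ and $f(S,\cdot)$ is concave and continuous for every $S\subset[n]$. Let $f^L$ be the Lovász extension of $f$ with respect to the first variable. Then $$\max_{y\in\mathcal{Y}}\min_{S\subset[n]}f(S,y)\le\min_{S\subset[n]}\max_{y\in\mathcal{Y}}f(S,y).$$ Moreover, if $$\min_{x\in[0,1]^n}\max_{y\in\mathcal{Y}}f^L(x,y)=\min_{x\in\{0,1\}^n}\max_{y\in\mathcal{Y}}f^L(x,y),$$ then $\max_{y\in\mathcal{Y}}\min_{S\subset[n]}f(S,y)=\min_{S\subset[n]}\max_{y\in\mathcal{Y}}f(S,y)=\min_{x\in[0,1]^n}\max_{y\in\mathcal{Y}}f^L(x,y)$, and $f$ admits a saddle point on $2^{[n]}\times\mathcal{Y}$.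
   Context: $[n]=\{1,\dots,n\}$; subsets $S\subset[n]$ are identified with their indicator vectors $\chi_S\in\{0,1\}^n$. A set function $g:2^{[n]}\to\mathbb{R}$ is submodular if $g(S)+g(T)\ge g(S\cap T)+g(S\cup T)$ for all $S,T\subset[n]$. Lovász extension: for $g:2^{[n]}\to\mathbb{R}$ and $x\in[0,1]^n$, choose a permutation $(j_1,\dots,j_n)$ of $[n]$ with $x_{j_1}\ge\dots\ge x_{j_n}$ and set $g^L(x)=(1-x_{j_1})\,g(\emptyset)+\sum_{k=1}^{n-1}(x_{j_k}-x_{j_{k+1}})\,g(\{j_1,\dots,j_k\})+x_{j_n}\,g([n])$. For $f:2^{[n]}\times\mathbb{R}^m\to\mathbb{R}$, the Lovász extension with respect to the first variable is $f^L(x,y):=(f(\cdot,y))^L(x)$. A saddle point of $f$ on $2^{[n]}\times\mathcal{Y}$ is a pair $(S^*,y^* )\in2^{[n]}\times\mathcal{Y}$ with $f(S^*,y)\le f(S^*,y^* )\le f(S,y^* )$ for all $S\subset[n]$, $y\in\mathcal{Y}$. *)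

(* Defs.v *)
From HB Require Import structures.
From mathcomp Require Import all_boot all_order all_algebra.
From mathcomp Require Import all_classical all_reals all_analysis.
Set Implicit Arguments. Unset Strict Implicit. Unset Printing Implicit Defensive.
Import Order.TTheory GRing.Theory Num.Theory.
Import numFieldNormedType.Exports.
Local Open Scope classical_set_scope.
Local Open Scope ring_scope.

Definition submodular (R : realType) (n : nat) (g : {set 'I_n} -> R) :=
  forall S T : {set 'I_n}, g (S :&: T) + g (S :|: T) <= g S + g T.

Definition convex_subset (R : realType) (m : nat) (Y : set 'rV[R]_m) :=
  forall a b : 'rV[R]_m, forall t : R, Y a -> Y b -> 0 <= t -> t <= 1 ->
    Y (t *: a + (1 - t) *: b).

Definition concave_fun (R : realType) (m : nat) (h : 'rV[R]_m -> R) :=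
  forall a b : 'rV[R]_m, forall t : R, 0 <= t -> t <= 1 ->
    t * h a + (1 - t) * h b <= h (t *: a + (1 - t) *: b).

(* A sorting permutation (j_1,...,j_n) of [n] with x_{j_1} >= ... >= x_{j_n},
   represented as the list js (index k-1 holds j_k). *)
Definition lovasz_order (R : realType) (n : nat) (x : 'I_n -> R) : seq 'I_n :=
  sort (fun i j => x j <= x i) (enum 'I_n).

(* Lovasz extension, with the conventions x_{j_0} := 1 and x_{j_{n+1}} := 0,
   so that g^L(x) = sum_{k=0}^{n} (x_{j_k} - x_{j_{k+1}}) g({j_1,...,j_k}),
   which is exactly the formula of the paper. *)
Definition lovasz (R : realType) (n : nat) (g : {set 'I_n} -> R)
    (x : 'I_n -> R) : R :=
  let js := lovasz_order x in
  let t := fun k : nat =>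
    if k == 0%N then 1
    else if (k <= n)%N then
      (match js with [::] => 0 | j0 :: _ => x (nth j0 js k.-1) end)
    else 0 in
  \sum_(k < n.+1) (t k - t k.+1) * g (finset (fun j => j \in take k js)).

Definition lovasz2 (R : realType) (n m : nat)
    (f : {set 'I_n} -> 'rV[R]_m -> R) (x : 'I_n -> R) (y : 'rV[R]_m) : R :=
  lovasz (fun S => f S y) x.

Definition saddle_point (R : realType) (n m : nat)
    (f : {set 'I_n} -> 'rV[R]_m -> R) (Y : set 'rV[R]_m)
    (S0 : {set 'I_n}) (y0 : 'rV[R]_m) :=
  Y y0 /\ (forall y, Y y -> f S0 y <= f S0 y0) /\
  (forall S, f S0 y0 <= f S y0).

Definition cube01 (R : realType) (n : nat) : set ('I_n -> R) :=
  [set x | forall i, 0 <= x i <= 1].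
Definition vert01 (R : realType) (n : nat) : set ('I_n -> R) :=
  [set x | forall i, x i = 0 \/ x i = 1].

(* Main.v *)
Require Import Defs.
From HB Require Import structures.
From mathcomp Require Import all_boot all_order all_algebra.
From mathcomp Require Import all_classical all_reals all_analysis.
From mathcomp Require Import ring lra.
Import Order.TTheory GRing.Theory Num.Theory.
Import numFieldNormedType.Exports.
Local Open Scope classical_set_scope.
Local Open Scope ring_scope.

Section Gen.
Context {R : realType}.

Lemma sup_max_eq (E : set R) e : E e -> (forall z, E z -> z <= e) -> sup E = e.
Proof.
move=> Ee ub; apply/le_anti/andP; split.
  by apply: ge_sup; [exists e | exact: ub].
by apply: ub_le_sup => //; exists e; exact: ub.
Qed.

Lemma inf_min_eq (E : set R) e : E e -> (forall z, E z -> e <= z) -> inf E = e.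
Proof.
move=> Ee lb; apply/le_anti/andP; split.
  by apply: ge_inf => //; exists e; exact: lb.
by apply: lb_le_inf; [exists e | exact: lb].
Qed.

Lemma bigmin_le (I : eqType) (a : R) (F : I -> R) s i :
  i \in s -> \big[Order.min/a]_(j <- s) F j <= F i.
Proof.
elim: s => // b s IH; rewrite in_cons big_cons => /orP [/eqP ->|/IH h].
  by rewrite ge_min lexx.
by rewrite ge_min h orbT.
Qed.

Lemma bigmin_mem (I : eqType) (a : R) (F : I -> R) s :
  \big[Order.min/a]_(j <- s) F j = a \/ exists2 i, i \in s & \big[Order.min/a]_(j <- s) F j = F i.
Proof.
elim: s => [|b s IH]; first by left; rewrite big_nil.
rewrite big_cons; case: (leP (F b) (\big[Order.min/a]_(j <- s) F j)) => h.
  by right; exists b => //; rewrite mem_head.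
case: IH => [->|[i si ->]]; first by left.
by right; exists i => //; rewrite in_cons si orbT.
Qed.

Lemma quad_ge0 (A B : R) : (forall t, 0 < t -> t <= 1 -> 0 <= 2 * t * A + t ^+ 2 * B) -> 0 <= A.
Proof.
move=> h; rewrite leNgt; apply/negP => A0.
have h1 : 0 <= 2 * A + B by have := h 1 ltr01 (lexx 1); rewrite expr1n !mulr1 mul1r.
have B0 : 0 < B by lra.
have t0 : 0 < - A / B by rewrite divr_gt0 // oppr_gt0.
have t1 : - A / B <= 1 by rewrite ler_pdivrMr // mul1r; lra.
have := h _ t0 t1.
have -> : 2 * (- A / B) * A + (- A / B) ^+ 2 * B = - (A ^+ 2 / B).
  by field; rewrite gt_eqF.
rewrite oppr_ge0 leNgt => /negP; apply; rewrite divr_gt0 //.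
by rewrite expr2 nmulr_rgt0.
Qed.

Lemma maxsq (u b t : R) : 0 <= t ->
  Order.max (u + t * b) 0 ^+ 2 <= Order.max u 0 ^+ 2 + 2 * t * (Order.max u 0 * b) + t ^+ 2 * b ^+ 2.
Proof.
move=> t0; case: (lerP 0 u) => hu.
  rewrite ?(max_l hu); case: (lerP 0 (u + t * b)) => hv.
    by rewrite ?(max_l hv); nra.
  rewrite ?(max_r (ltW hv)); nra.
rewrite ?(max_r (ltW hu)); case: (lerP 0 (u + t * b)) => hv.
  rewrite ?(max_l hv); have : (0 <= - u * (2 * t * b + u)) by nra. nra.
rewrite ?(max_r (ltW hv)); nra.
Qed.

Lemma maxsq_mono (a a' : R) : a <= a' -> Order.max a 0 ^+ 2 <= Order.max a' 0 ^+ 2.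
Proof.
move=> h; have v0 : 0 <= Order.max a 0 by rewrite le_max lexx orbT.
have vv : Order.max a 0 <= Order.max a' 0 by rewrite ge_max !le_max h lexx !orbT.
by rewrite !expr2 ler_pM.
Qed.

End Gen.
Section Top.
Context {R : realType} {m : nat}.

Lemma attain_max (Y : set 'rV[R]_m) (h : 'rV[R]_m -> R) :
  Y !=set0 -> compact Y -> continuous h ->
  exists2 c, Y c & forall t, Y t -> h t <= h c.
Proof.
move=> Y0 cY ch.
have [c Yc hc] := EVT_max_rV Y0 cY (continuous_subspaceT ch).
exists c; first by rewrite inE in Yc.
by move=> t Yt; apply: hc; rewrite inE.
Qed.

Lemma cont_sum (I : Type) (F : I -> 'rV[R]_m -> R) (s : seq I) :
  (forall i, continuous (F i)) -> continuous (fun y => \sum_(i <- s) F i y).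
Proof.
move=> cF; elim: s => [|a s IH].
  under eq_fun do rewrite big_nil; exact: cst_continuous.
under eq_fun do rewrite big_cons.
by move=> y; apply: continuousD; [exact: cF | exact: IH].
Qed.

Lemma cont_bigmin (I : Type) (F0 : 'rV[R]_m -> R) (F : I -> 'rV[R]_m -> R) (s : seq I) :
  continuous F0 -> (forall i, continuous (F i)) ->
  continuous (fun y => \big[Order.min/F0 y]_(i <- s) F i y).
Proof.
move=> c0 cF; elim: s => [|a s IH].
  by under eq_fun do rewrite big_nil.
under eq_fun do rewrite big_cons.
by move=> y; apply: (@continuous_min _ _ (F a) (fun y => \big[Order.min/F0 y]_(i <- s) F i y)); [exact: cF | exact: IH].
Qed.

Lemma cont_maxsq (c : R) (h : 'rV[R]_m -> R) : continuous h ->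
  continuous (fun y => Order.max (c - h y) 0 ^+ 2).
Proof.
move=> ch y.
have c1 : {for y, continuous (fun y => Order.max (c - h y) 0)}.
  apply: (@continuous_max _ _ (fun y => c - h y) (fun _ => 0)).
    by apply: continuousB; [exact: cst_continuous | exact: ch].
  exact: cst_continuous.
under eq_fun do rewrite expr2.
exact: (continuousM c1 c1).
Qed.

End Top.
Section Lov2.
Context {R : realType} {n : nat}.
Implicit Types (x : 'I_n -> R) (g : {set 'I_n} -> R).

Definition ltt (x : 'I_n -> R) (k : nat) : R :=
  let js := lovasz_order x in
    if k == 0%N then 1
    else if (k <= n)%N then
      (match js with [::] => 0 | j0 :: _ => x (nth j0 js k.-1) end)
    else 0.

Definition SS (x : 'I_n -> R) (k : nat) : {set 'I_n} :=
  finset (fun j => j \in take k (lovasz_order x)).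

Lemma lovaszE (g : {set 'I_n} -> R) x :
  lovasz g x = \sum_(k < n.+1) (ltt x k - ltt x k.+1) * g (SS x k).
Proof. by []. Qed.

Lemma size_lo x : size (lovasz_order x) = n.
Proof. by rewrite size_sort size_enum_ord. Qed.

Lemma ltt0 x : ltt x 0 = 1. Proof. by []. Qed.
Lemma lttn x : ltt x n.+1 = 0. Proof. by rewrite /ltt /= ltnn. Qed.
Lemma lttS x k i0 : (k < n)%N -> ltt x k.+1 = x (nth i0 (lovasz_order x) k).
Proof.
move=> kn; rewrite /ltt /= kn.
have := size_lo x; case E: (lovasz_order x) => [|j0 s] /=.
  by move=> n0; rewrite -n0 in kn.
by move=> _; rewrite -E; apply: congr1; apply: set_nth_default; rewrite size_lo.
Qed.
Lemma lttbig x k : (n < k)%N -> ltt x k = 0.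
Proof. by move=> nk; rewrite /ltt; case: eqP => [k0|_]; [rewrite k0 in nk|rewrite leqNgt nk]. Qed.

Lemma abel (T G : nat -> R) N :
  \sum_(k < N.+1) (T k - T k.+1) * G k =
  T 0%N * G 0%N + \sum_(k < N) T k.+1 * (G k.+1 - G k) - T N.+1 * G N.
Proof.
elim: N => [|N IH]; first by rewrite big_ord1 big_ord0; ring.
by rewrite big_ord_recr IH big_ord_recr /=; ring.
Qed.

Lemma sorted_lo x : sorted (fun i j => x j <= x i) (lovasz_order x).
Proof. by apply: sort_sorted => i j; exact: le_total. Qed.

Lemma ltt_cube x : cube01 x -> forall k, 0 <= ltt x k <= 1.
Proof.
move=> cx [|k]; first by rewrite ltt0 ler01 lexx.
case: (ltnP k n) => kn; last by rewrite lttbig ?ltnS // lexx ler01.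
have i0 : 'I_n by exact: Ordinal kn.
by rewrite (lttS _ _ i0 kn); apply: cx.
Qed.

Lemma ltt_mono x : cube01 x -> forall k, ltt x k.+1 <= ltt x k.
Proof.
move=> cx [|k]; first by rewrite ltt0; case/andP: (ltt_cube _ cx 1).
case: (ltnP k.+1 n) => kn; last first.
  by rewrite lttbig ?ltnS //; case/andP: (ltt_cube _ cx k.+1).
have i0 : 'I_n by exact: Ordinal kn.
rewrite (lttS _ _ i0 kn) (lttS _ _ i0 (ltnW kn)).
apply: (@sorted_leq_nth _ (fun i j => x j <= x i)).
all: rewrite ?inE ?size_lo ?(ltnW kn) //.
all: try exact: sorted_lo.
all: try (by move=> a; exact: lexx).
by move=> a b c h1 h2; exact: le_trans h2 h1.
Qed.


Lemma coef_sum x : \sum_(k < n.+1) (ltt x k - ltt x k.+1) = 1.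
Proof.
have := abel (ltt x) (fun _ => 1) n.
under eq_bigr do rewrite mulr1.
move=> ->; rewrite big1 ?ltt0 ?lttn => [|k _]; last by rewrite subrr mulr0.
by rewrite mul0r subr0 addr0 mulr1.
Qed.

Lemma coef_ge0 x : cube01 x -> forall k, 0 <= ltt x k - ltt x k.+1.
Proof. by move=> cx k; rewrite subr_ge0 ltt_mono. Qed.

Lemma lovasz_ge x g lo : cube01 x -> (forall S, lo <= g S) -> lo <= lovasz g x.
Proof.
move=> cx hg; rewrite lovaszE -[lo]mul1r -(coef_sum x) big_distrl /=.
by apply: ler_sum => k _; rewrite ler_wpM2l ?coef_ge0.
Qed.

Lemma lovasz_le x g hi : cube01 x -> (forall S, g S <= hi) -> lovasz g x <= hi.
Proof.
move=> cx hg; rewrite lovaszE -[hi]mul1r -(coef_sum x) big_distrl /=.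
by apply: ler_sum => k _; rewrite ler_wpM2l ?coef_ge0.
Qed.

Lemma vert_cube x : vert01 x -> cube01 x.
Proof. by move=> vx i; case: (vx i) => ->; rewrite ?lexx ?ler01. Qed.

Lemma ltt01 x : vert01 x -> forall k, ltt x k = 0 \/ ltt x k = 1.
Proof.
move=> vx [|k]; first by right.
case: (ltnP k n) => kn; last by left; rewrite lttbig.
have i0 : 'I_n by exact: Ordinal kn.
by rewrite (lttS _ _ i0 kn); apply: vx.
Qed.

Lemma lovasz_vert x : vert01 x -> exists k, forall g, lovasz g x = g (SS x k).
Proof.
move=> vx; have cx := vert_cube _ vx.
pose c k := ltt x k - ltt x k.+1.
have c01 k : c k = 0 \/ c k = 1.
  have := coef_ge0 _ cx k; rewrite /c.
  by case: (ltt01 _ vx k) => ->; case: (ltt01 _ vx k.+1) => ->; rewrite ?subrr ?subr0;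
    auto; rewrite sub0r oppr_ge0 ler10.
case: (pickP (fun k : 'I_n.+1 => c k != 0)) => [k0 Hk0 | H]; last first.
  have := coef_sum x; rewrite big1 => [|k _]; last by have /negbFE/eqP := H k.
  by move/eqP; rewrite eq_sym oner_eq0.
have ck0 : c k0 = 1 by case: (c01 k0) Hk0 => -> //; rewrite eqxx.
have hs := coef_sum x; rewrite (bigD1 k0) //= -/(c k0) ck0 in hs.
have rest : \sum_(k < n.+1 | k != k0) c k = 0.
  by apply: (@addrI _ 1); rewrite addr0; exact: hs.
have restk : forall k : 'I_n.+1, k != k0 -> c k = 0.
  by apply/psumr_eq0P => // k _; exact: coef_ge0.
exists k0 => g; rewrite lovaszE (bigD1 k0) //= -/(c k0) ck0 mul1r big1 ?addr0 //.
by move=> k kk0; rewrite -/(c k) restk // mul0r.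
Qed.

Lemma SSS x i0 k : (k < n)%N -> SS x k.+1 = nth i0 (lovasz_order x) k |: SS x k.
Proof.
move=> kn; apply/setP => j.
by rewrite /SS !inE (take_nth i0) ?size_lo // mem_rcons in_cons.
Qed.

Lemma SS0 x : SS x 0 = finset.set0.
Proof. by apply/setP => j; rewrite /SS !inE take0. Qed.

Lemma SSn x : SS x n = finset.setT.
Proof. by apply/setP => j; rewrite /SS !inE take_oversize ?size_lo // mem_sort mem_enum. Qed.

Lemma greedy g x i0 (S : {set 'I_n}) K : submodular g -> (K <= n)%N ->
  g (SS x 0) + \sum_(0 <= k < K)
     ((nth i0 (lovasz_order x) k \in S)%:R * (g (SS x k.+1) - g (SS x k)))
  <= g (S :&: SS x K).
Proof.
move=> sg; elim: K => [|K IH] Kn.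
  by rewrite big_geq // addr0 SS0 finset.setI0.
rewrite big_nat_recr //= (@SSS x i0 K Kn).
set a := nth i0 (lovasz_order x) K.
have IH' := IH (ltnW Kn).
case Ha: (a \in S); last first.
  rewrite mul0r addr0.
  suff -> : S :&: (a |: SS x K) = S :&: SS x K by [].
  apply/setP => j; rewrite !inE; have [->|] := eqVneq j a; by rewrite ?Ha.
rewrite mul1r.
have := sg (S :&: (a |: SS x K)) (SS x K).
have -> : S :&: (a |: SS x K) :&: SS x K = S :&: SS x K.
  apply/setP => j; rewrite !inE; have [->|] := eqVneq j a; rewrite ?Ha //=.
  by move=> _; rewrite -andbA andbb.
have -> : S :&: (a |: SS x K) :|: SS x K = a |: SS x K.
  apply/setP => j; rewrite !inE; have [->|] := eqVneq j a; rewrite ?Ha //=.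
  by move=> _; case: (_ \in S); case: (_ \in take _ _).
move=> h; lra.
Qed.

Lemma uncross g x (p : {set 'I_n} -> R) : submodular g ->
  (forall S, 0 <= p S) -> \sum_S p S = 1 ->
  (forall i, x i = \sum_S p S * (i \in S)%:R) ->
  lovasz g x <= \sum_S p S * g S.
Proof.
move=> sg p0 p1 px.
rewrite lovaszE (abel (ltt x) (fun k => g (SS x k))) ltt0 lttn mul1r mul0r subr0.
case: (posnP n) => [n0|npos].
  have allS : forall S : {set 'I_n}, S = SS x 0.
    move=> S; rewrite SS0; apply/setP => i; have := ltn_ord i; by rewrite {2}n0.
  rewrite big1 => [|k _]; last by have := ltn_ord k; rewrite {2}n0.
  rewrite addr0 (eq_bigr (fun S => p S * g (SS x 0))) => [|S _]; last by rewrite [in g S](allS S).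
  by rewrite -big_distrl /= p1 mul1r.
pose i0 := Ordinal npos.
have E : \sum_(k < n) ltt x k.+1 * (g (SS x k.+1) - g (SS x k)) =
  \sum_S p S * \sum_(0 <= k < n) ((nth i0 (lovasz_order x) k \in S)%:R * (g (SS x k.+1) - g (SS x k))).
  under eq_bigr => k _ do rewrite (lttS _ _ i0 (ltn_ord k)) px big_distrl /=.
  rewrite exchange_big /=; apply: eq_bigr => S _.
  rewrite big_mkord big_distrr /=; apply: eq_bigr => k _; ring.
rewrite E.
have -> : g (SS x 0) = \sum_S p S * g (SS x 0) by rewrite -big_distrl /= p1 mul1r.
rewrite -big_split /=.
apply: ler_sum => S _; rewrite -mulrDr ler_wpM2l //.
have := greedy g x i0 S n sg (leqnn n); rewrite SSn finset.setIT.
by [].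
Qed.

End Lov2.
Lemma core (R : realType) (n m : nat) (Y : set 'rV[R]_m) (f : {set 'I_n} -> 'rV[R]_m -> R) :
  Y !=set0 -> convex_subset Y -> compact Y ->
  (forall y, submodular (fun S => f S y)) -> (forall S, concave_fun (f S)) ->
  (forall S, continuous (f S)) ->
  forall c, (forall y, Y y -> exists S, f S y < c) ->
  exists x, cube01 x /\ forall y, Y y -> lovasz2 f x y <= c.
Proof.
move=> Y0 cvY cY sm cc fc c hc.
pose phi y := \sum_S Order.max (c - f S y) 0 ^+ 2.
have cphi0 : continuous phi.
  apply: (@cont_sum _ _ _ (fun S y => Order.max (c - f S y) 0 ^+ 2)) => S; exact: cont_maxsq.
have cphi : continuous (fun y => - phi y).
  by move=> y; apply: continuousN; exact: cphi0.
have [y0 Yy0 hy0] := @attain_max _ _ Y _ Y0 cY cphi.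
have phimin : forall y, Y y -> phi y0 <= phi y by move=> y Yy; rewrite -lerN2; exact: hy0.
pose d S := Order.max (c - f S y0) 0.
have d0 S : 0 <= d S by rewrite le_max lexx orbT.
have claim : forall y, Y y -> 0 <= \sum_S d S * (c - f S y).
  move=> y Yy.
  pose b S := (c - f S y) - (c - f S y0).
  pose A := \sum_S d S * b S.
  pose B := \sum_S b S ^+ 2.
  have hA : 0 <= A.
    apply: (@quad_ge0 R A B) => t t0 t1.
    pose yt := t *: y + (1 - t) *: y0.
    have Yyt : Y yt by apply: cvY => //; exact: ltW.
    have h0 : phi y0 <= phi yt := phimin _ Yyt.
    have le1 : phi yt <= \sum_S (d S ^+ 2 + 2 * t * (d S * b S) + t ^+ 2 * b S ^+ 2).
      rewrite /phi; apply: ler_sum => S _.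
      apply: (le_trans _ (maxsq (c - f S y0) (b S) t (ltW t0))).
      apply: maxsq_mono.
      have := cc S y y0 t (ltW t0) t1; rewrite /b /yt; lra.
    move: le1; rewrite !big_split /= -!big_distrr /= -/A -/B.
    have e0 : phi y0 = \sum_S d S ^+ 2 by [].
    rewrite e0 in h0.
    lra.
  rewrite (eq_bigr (fun S => d S * (c - f S y0) + d S * b S)) => [|S _]; last by rewrite /b; ring.
  rewrite big_split /=; apply: addr_ge0 => //; apply: sumr_ge0 => S _.
  rewrite /d; case: (lerP 0 (c - f S y0)) => h; last by rewrite mul0r.
  by rewrite mulr_ge0.
have [S1 hS1] := hc y0 Yy0.
pose D := \sum_S d S.
have D0 : 0 < D.
  have dS1 : 0 < d S1 by rewrite /d lt_max subr_gt0 hS1.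
  rewrite /D (bigD1 S1) //=; apply: (lt_le_trans dS1); rewrite lerDl.
  by apply: sumr_ge0.
pose p S := d S / D.
have p0 S : 0 <= p S by rewrite divr_ge0 // ltW.
have p1 : \sum_S p S = 1 by rewrite -big_distrl /= divff // gt_eqF.
pose x := fun i : 'I_n => \sum_S p S * (i \in S)%:R.
exists x; split.
  move=> i; apply/andP; split.
    by apply: sumr_ge0 => S _; rewrite mulr_ge0.
  rewrite -p1; apply: ler_sum => S _.
  by case: (i \in S); rewrite ?mulr1 ?mulr0.
move=> y Yy; rewrite /lovasz2.
apply: le_trans (uncross (fun S => f S y) x p (sm y) p0 p1 (fun i => erefl)) _.
have e : \sum_S d S * (c - f S y) = c * D - \sum_S d S * f S y.
  by rewrite /D mulr_sumr -sumrB; apply: eq_bigr => S _; ring.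
have := claim y Yy; rewrite e subr_ge0 => h.
have -> : \sum_S p S * f S y = (\sum_S d S * f S y) / D.
  by rewrite big_distrl /=; apply: eq_bigr => S _; rewrite /p mulrAC.
by rewrite ler_pdivrMr.
Qed.

Theorem proposition1 (R : realType) (n m : nat)
  (Y : set 'rV[R]_m) (f : {set 'I_n} -> 'rV[R]_m -> R) :
  Y !=set0 -> convex_subset Y -> compact Y ->
  (forall y, submodular (fun S => f S y)) ->
  (forall S, concave_fun (f S)) ->
  (forall S, continuous (f S)) ->
  let maxmin := sup [set inf [set f S y | S in [set: {set 'I_n}]] | y in Y] in
  let minmax := inf [set sup [set f S y | y in Y] | S in [set: {set 'I_n}]] in
  let relax := fun D : set ('I_n -> R) =>
    inf [set sup [set lovasz2 f x y | y in Y] | x in D] in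
  maxmin <= minmax /\
  (relax (@cube01 R n) = relax (@vert01 R n) ->
     maxmin = minmax /\ minmax = relax (@cube01 R n) /\
     exists S0 y0, saddle_point f Y S0 y0).
Proof.
move=> Y0 cvY cY sm cc fc maxmin minmax relax.
pose gm y := \big[Order.min/f finset.set0 y]_(S <- index_enum {set 'I_n}) f S y.
have gm_le y S : gm y <= f S y by apply: bigmin_le; rewrite mem_index_enum.
have gm_att y : exists S, gm y = f S y.
  by rewrite /gm; case: (bigmin_mem _ (f finset.set0 y) (fun S => f S y) (index_enum {set 'I_n}))
    => [->|[S _ ->]]; [exists finset.set0 | exists S].
have gm_c : continuous gm.
  by apply: (@cont_bigmin _ _ _ (f finset.set0) (fun S => f S)).
have [ys Yys ysmax] := @attain_max _ _ Y _ Y0 cY gm_c.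
have infE y : inf [set f S y | S in [set: {set 'I_n}]] = gm y.
  have [S0 hS0] := gm_att y.
  apply: inf_min_eq; first by exists S0 => //.
  by move=> _ [S _ <-].
have Emaxmin : maxmin = gm ys.
  apply: sup_max_eq; first by exists ys => //; rewrite infE.
  by move=> _ [y Yy <-]; rewrite infE; exact: ysmax.
pose M S := sup [set f S y | y in Y].
have Matt S : (exists2 yS, Y yS & M S = f S yS) /\ (forall y, Y y -> f S y <= M S).
  have [yS YyS hS] := @attain_max _ _ Y _ Y0 cY (fc S).
  have e : M S = f S yS by apply: sup_max_eq; [exists yS | move=> _ [y Yy <-]; exact: hS].
  by split; [exists yS | move=> y Yy; rewrite e; exact: hS].
have Mub S y : Y y -> f S y <= M S by case: (Matt S) => _; apply.
pose Mm := \big[Order.min/M finset.set0]_(S <- index_enum {set 'I_n}) M S.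
have Mm_le S : Mm <= M S by apply: bigmin_le; rewrite mem_index_enum.
have [Sst hSst] : exists S, Mm = M S.
  by rewrite /Mm; case: (bigmin_mem _ (M finset.set0) M (index_enum {set 'I_n}))
    => [->|[S _ ->]]; [exists finset.set0 | exists S].
have Eminmax : minmax = M Sst.
  apply: inf_min_eq; first by exists Sst.
  by move=> _ [S _ <-]; rewrite -hSst; exact: Mm_le.
have weak : maxmin <= minmax.
  by rewrite Emaxmin Eminmax; apply: le_trans (gm_le ys Sst) (Mub _ _ Yys).
split => // hrel.
have hvert : minmax <= relax (@vert01 R n).
  apply: lb_le_inf.
    exists (sup [set lovasz2 f (fun _ => 0) y | y in Y]).
    by exists (fun _ => 0) => // i; left.
  move=> _ [x vx <-].
  have [k hk] := lovasz_vert x vx.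
  have -> : [set lovasz2 f x y | y in Y] = [set f (SS x k) y | y in Y].
    by apply/seteqP; split => _ [y Yy <-]; exists y => //; rewrite /lovasz2 hk.
  by rewrite Eminmax -/(M (SS x k)) -hSst.
pose B := \sum_S `|M S|.
have fB S y : Y y -> f S y <= B.
  move=> Yy; apply: le_trans (Mub _ _ Yy) _; apply: le_trans (ler_norm _) _.
  rewrite /B (bigD1 S) //= lerDl; apply: sumr_ge0 => T _; exact: normr_ge0.
have lbc : forall x, cube01 x -> gm ys <= sup [set lovasz2 f x y | y in Y].
  move=> x cx; apply: le_trans (_ : lovasz2 f x ys <= _).
    by apply: lovasz_ge => // S; exact: gm_le.
  apply: ub_le_sup; last by exists ys.
  exists B => _ [y Yy <-]; apply: lovasz_le => // S; exact: fB.
have key : forall c, gm ys < c -> relax (@cube01 R n) <= c.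
  move=> c hc.
  have [x [cx hx]] : exists x, cube01 x /\ forall y, Y y -> lovasz2 f x y <= c.
    apply: core => // y Yy.
    have [S hS] := gm_att y.
    by exists S; rewrite -hS; apply: le_lt_trans (ysmax _ Yy) hc.
  apply: le_trans (_ : sup [set lovasz2 f x y | y in Y] <= c).
    apply: ge_inf; last by exists x.
    by exists (gm ys) => _ [x' cx' <-]; exact: lbc.
  by apply: ge_sup; [case: Y0 => y Yy; exists (lovasz2 f x y), y | move=> _ [y Yy <-]; exact: hx].
have hcube : relax (@cube01 R n) <= gm ys.
  rewrite leNgt; apply/negP => h.
  have := key ((relax (@cube01 R n) + gm ys) / 2).
  have h1 : gm ys < (relax (@cube01 R n) + gm ys) / 2 by lra.
  move=> /(_ h1); lra.
have e1 : maxmin = minmax.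
  apply/le_anti; rewrite weak /=.
  by apply: le_trans hvert _; rewrite -hrel Emaxmin.
have e2 : minmax = relax (@cube01 R n).
  apply/le_anti/andP; split; first by rewrite hrel.
  by rewrite -e1 Emaxmin.
split => //; split => //.
exists Sst, ys; split => //; split.
  move=> y Yy; apply: le_trans (Mub _ _ Yy) _.
  rewrite -Eminmax -e1 Emaxmin; exact: gm_le.
move=> S; apply: le_trans (Mub _ _ Yys) _.
by rewrite -Eminmax -e1 Emaxmin; exact: gm_le.
Qed.
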